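(* Let $\mathcal{G}_n$ be the random graph described in the context and, for $\delta_n>0$ and $u\in\mathcal{V}_n^k$, let $$A_n^k(u)=\Big\{\big|N_n^k(u)-a_nV_n^k\big|\ge\sqrt{a_nV_n^k\delta_n}\Big\}.$$ Suppose the sequences $\gamma_n>0$ and $\delta_n>0$ satisfy $$\lim_{n\to\infty}\delta_n=\infty,\qquad\limsup_{n\to\infty}\frac{\delta_n}{\lambda_n}<\infty,\qquad\limsup_{n\to\infty}\frac{\gamma_n}{\delta_n}<\infty.$$ Then $\frac{\gamma_n}{n}\sum_{u\in\mathcal{V}_n^k}\mathbf{1}\{A_n^k(u)\}\Rightarrow0$ as $n\to\infty$, for all $k\in\{1,2\}$.
   Context: For each $n$, the node set $\mathcal{V}_n=\mathcal{V}_n^1\cup\mathcal{V}_n^2$ is a disjoint union of two communities of sizes $V_n^k=|\mathcal{V}_n^k|$ with $V_n^k/n\to v^k\in(0,\infty)$. The graph $\mathcal{G}_n$ is a stochastic block model: each unordered pair of distinct nodes is an edge independently, with probability $a_n=a\lambda_n/n$ if both are in the same community and $b_n=b\lambda_n/n$ otherwise, where $a>b>0$ are constants and $\lambda_n\to\infty$. $N_n^k(u)$ denotes the number of neighbors of $u$ in $\mathcal{V}_n^k$. $\Rightarrow$ denotes weak convergence (here to the constant $0$). *)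

(* Defs.v *)
From mathcomp Require Import all_boot all_order all_algebra.
From mathcomp Require Import all_classical all_reals all_analysis.
Set Implicit Arguments. Unset Strict Implicit. Unset Printing Implicit Defensive.
Import Order.TTheory GRing.Theory Num.Theory.
Import numFieldNormedType.Exports.
Local Open Scope classical_set_scope.
Local Open Scope ring_scope.

(* V : 'I_2 -> nat gives the community sizes |V^1| = V ord0, |V^2| = V ord_max.                          *)
Section SBM.
Variable R : realType.
Variable V : 'I_2 -> nat.

Definition sbm_node := 'I_(V ord0 + V ord_max).

Definition community (u : sbm_node) : 'I_2 :=
  if (u < V ord0)%N then ord0 else ord_max.

(* A graph is encoded by the indicator of its edges {u,v}, stored on the
   ordered pairs (u,v) with u < v; the other entries must be false. *)
Definition sbm_graph := {ffun sbm_node * sbm_node -> bool}.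

Definition adj (g : sbm_graph) (u v : sbm_node) : bool :=
  ((u < v)%N && g (u, v)) || ((v < u)%N && g (v, u)).

Definition edge_prob (p q : R) (u v : sbm_node) : R :=
  if community u == community v then p else q.

Definition sbm_weight (p q : R) (g : sbm_graph) : R :=
  (if [forall e : sbm_node * sbm_node, g e ==> (e.1 < e.2)%N] then 1 else 0) *
  \prod_(e : sbm_node * sbm_node | (e.1 < e.2)%N)
     (if g e then edge_prob p q e.1 e.2 else 1 - edge_prob p q e.1 e.2).

Definition sbm_expect (p q : R) (X : sbm_graph -> R) : R :=
  \sum_(g : sbm_graph) sbm_weight p q g * X g.

Definition nbr_count (g : sbm_graph) (u : sbm_node) (k : 'I_2) : nat :=
  #|[set v : sbm_node | adj g u v && (community v == k)]%SET|.

End SBM.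

(* Weak convergence of a sequence of random variables X_n to the constant c,
   given through the expectation functionals Ef f n = E[f(X_n)]:
   E[f(X_n)] -> f(c) for every bounded continuous f : R -> R. *)
Definition weak_cvg_const {R : realType} (Ef : (R -> R) -> nat -> R) (c : R) :=
  forall f : R -> R, continuous f -> (exists M : R, forall x, `|f x| <= M) ->
    Ef f @ \oo --> f c.

(* Main.v *)
Require Import Defs.
From mathcomp Require Import all_boot all_order all_algebra.
From mathcomp Require Import all_classical all_reals all_analysis.
Import Order.TTheory GRing.Theory Num.Theory.
Import numFieldNormedType.Exports.
Local Open Scope classical_set_scope.
Local Open Scope ring_scope.
From mathcomp Require Import ring lra.
Set Implicit Arguments. Unset Strict Implicit. Unset Printing Implicit Defensive.

Section Comb.
Variable R : realType.
Variable V : 'I_2 -> nat.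
Local Notation T := (sbm_node V).
Local Notation E := (T * T)%type.
Variables p q : R.

Definition upper (e : E) : bool := (e.1 < e.2)%N.
Definition ep (e : E) : R := edge_prob p q e.1 e.2.
Definition wF (e : E) (b : bool) : R :=
  if upper e then (if b then ep e else 1 - ep e) else (if b then 0 else 1).

Lemma weight_prod (g : sbm_graph V) :
  sbm_weight p q g = \prod_(e : E) wF e (g e).
Proof.
rewrite /sbm_weight (bigID upper predT) /= mulrC; congr (_ * _).
  by apply: eq_bigr => e; rewrite /wF /upper /= => ue; rewrite ue.
case: forallP => H; rewrite ?mul1r ?mul0r.
  apply/esym; apply: big1 => e; rewrite /wF /upper /= => ue; rewrite (negbTE ue).
  by have := H e; case: (g e) => //=; rewrite /upper (negbTE ue).
have [e He] : exists e, ~~ (g e ==> upper e).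
  by apply/existsP; rewrite -negb_forall; apply/negP => /forallP.
move: He; rewrite negb_imply => /andP [ge ue].
by rewrite (bigD1 e) //= /wF (negbTE ue) ge mul0r.
Qed.

Lemma expect_prod (h : E -> bool -> R) :
  sbm_expect p q (fun g => \prod_(e | upper e) h e (g e)) =
  \prod_(e | upper e) (ep e * h e true + (1 - ep e) * h e false).
Proof.
pose F e b := wF e b * (if upper e then h e b else 1).
have -> : sbm_expect p q (fun g => \prod_(e | upper e) h e (g e)) =
   \sum_(g : sbm_graph V) \prod_(e : E) F e (g e).
  apply: eq_bigr => g _; rewrite weight_prod big_split /=; congr (_ * _).
  rewrite [LHS]big_mkcond /=; apply: eq_bigr => e _; by case: (upper e).
rewrite -bigA_distr_bigA /= [RHS]big_mkcond /=; apply: eq_bigr => e _.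
rewrite big_bool /F /wF; case: (upper e); first by [].
by rewrite /= !mulr1 add0r.
Qed.

End Comb.

Section Count.
Variable V : 'I_2 -> nat.
Local Notation T := (sbm_node V).
Local Notation E := (T * T)%type.

Definition cE (u : T) (k : 'I_2) (e : E) : bool :=
  ((e.1 == u) && (community e.2 == k)) || ((e.2 == u) && (community e.1 == k)).

Lemma nbr_count_sum (g : sbm_graph V) u k :
  nbr_count g u k = (\sum_(e : E | upper e) (g e && cE u k e))%N.
Proof.
have -> : nbr_count g u k = (\sum_v ((adj g u v && (community v == k)) : nat))%N.
  rewrite /nbr_count -sum1_card big_mkcond /=; apply: eq_bigr => v _.
  by rewrite inE; case: (_ && _).
have -> : (\sum_(e : E | upper e) (g e && cE u k e) =
  \sum_(x : T) \sum_(y : T) (((x < y)%N && g (x, y) && (x == u) && (community y == k)) : nat) +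
  \sum_(x : T) \sum_(y : T) (((x < y)%N && g (x, y) && (y == u) && (community x == k)) : nat))%N.
  rewrite !pair_bigA -big_split big_mkcond /=; apply: eq_bigr => [[x y]] _ /=.
  rewrite /upper /cE /=.
  case: (eqVneq x u) => [->|xu]; case: (eqVneq y u) => [->|yu] /=;
    rewrite ?ltnn //=; case: ltnP => xy //=; case: (g _) => //=;
    by case: (_ == k).
have h1 : (\sum_(x : T) \sum_(y : T) (((x < y)%N && g (x, y) && (x == u) && (community y == k)) : nat) =
   \sum_(y : T) (((u < y)%N && g (u, y) && (community y == k)) : nat))%N.
  rewrite (@bigD1 _ _ _ 'I_(V ord0 + V ord_max) u) //= addnC big1 ?add0n; last first.
    move=> x /negbTE xu; apply: big1 => y _; by rewrite xu !andbF.
  by apply: eq_bigr => y _; rewrite eqxx andbT.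
have h2 : (\sum_(x : T) \sum_(y : T) (((x < y)%N && g (x, y) && (y == u) && (community x == k)) : nat) =
   \sum_(x : T) (((x < u)%N && g (x, u) && (community x == k)) : nat))%N.
  apply: eq_bigr => x _.
  rewrite (@bigD1 _ _ _ 'I_(V ord0 + V ord_max) u) //= addnC big1 ?add0n; last first.
    move=> y /negbTE yu; by rewrite yu !andbF.
  by rewrite eqxx andbT.
rewrite h1 h2.
rewrite -big_split /=; apply: eq_bigr => v _.
rewrite /adj.
case: (ltngtP u v) => uv /=; rewrite ?andbF ?orbF //=; try by case: (_ && _).
Qed.

End Count.

Section Count2.
Variable V : 'I_2 -> nat.
Local Notation T := (sbm_node V).
Local Notation E := (T * T)%type.

Lemma I2_cases (k : 'I_2) : k = ord0 \/ k = ord_max.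
Proof.
case: k => [[|[|m]]] Hk; [left|right|by []]; exact: val_inj.
Qed.

Lemma card_comm k : #|[set v : T | community v == k]%SET| = V k.
Proof.
rewrite -sum1_card big_mkcond /= big_split_ord /=.
have c0 : forall i : 'I_(V ord0), community (lshift (V ord_max) i) = ord0.
  by move=> i; rewrite /community /= ltn_ord.
have c1 : forall i : 'I_(V ord_max), community (rshift (V ord0) i) = ord_max.
  by move=> i; rewrite /community /= ltnNge leq_addr.
under eq_bigr do rewrite inE c0.
under [X in (_ + X)%N]eq_bigr do rewrite inE c1.
case: (I2_cases k) => ->.
  rewrite eqxx (_ : (ord_max == ord0 :> 'I_2) = false) //.
  by rewrite big1_eq addn0 sum1_card card_ord.
rewrite eqxx (_ : (ord0 == ord_max :> 'I_2) = false) //.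
by rewrite big1_eq add0n sum1_card card_ord.
Qed.
End Count2.

Section Count3.
Variable V : 'I_2 -> nat.
Local Notation T := (sbm_node V).
Local Notation E := (T * T)%type.

Lemma m_count (u : T) k : community u = k ->
  (\sum_(e : E | upper e) (cE u k e : nat))%N = (V k).-1.
Proof.
move=> uk.
have := nbr_count_sum [ffun _ => true] u k.
under [X in _ = X -> _]eq_bigr do rewrite ffunE /=.
move=> <-; rewrite /nbr_count -(card_comm V k).
rewrite (cardsD1 u [set v : T | community v == k]%SET) inE uk eqxx add1n /=.
apply: eq_card => v; rewrite !inE /adj !ffunE !andbT.
by rewrite neq_ltn orbC.
Qed.
End Count3.

Section Expect.
Variable R : realType.
Variable V : 'I_2 -> nat.
Local Notation T := (sbm_node V).
Local Notation E := (T * T)%type.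
Variables p q : R.

Lemma exprn_sum (x : R) (I : Type) (r : seq I) (P : pred I) (F : I -> nat) :
  x ^+ (\sum_(i <- r | P i) F i)%N = \prod_(i <- r | P i) x ^+ F i.
Proof. exact: (big_morph (fun n => x ^+ n) (exprD x) (expr0 x)). Qed.

Lemma expect_mgf (u : T) k (z : R) : community u = k ->
  sbm_expect p q (fun g => z ^+ nbr_count g u k) = (1 + p * (z - 1)) ^+ (V k).-1.
Proof.
move=> uk.
have H : forall g : sbm_graph V, z ^+ nbr_count g u k =
    \prod_(e : E | upper e) z ^+ (g e && cE u k e).
  move=> g; rewrite nbr_count_sum.
  exact: exprn_sum.
rewrite (boolp.funext H).
rewrite (expect_prod p q (fun e b => z ^+ (b && cE u k e))) /=.
rewrite -(m_count uk) exprn_sum.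
apply: eq_bigr => e _.
case ce: (cE u k e) => /=.
  have -> : ep p q e = p.
    rewrite /ep /edge_prob; move: ce; rewrite /cE.
    by case/orP => /andP [/eqP -> /eqP ->]; rewrite uk eqxx.
  by rewrite expr1 expr0 mulr1; ring.
by rewrite !expr0 !mulr1 subrKC.
Qed.

Lemma expect1 : sbm_expect p q (fun _ : sbm_graph V => 1) = 1.
Proof.
rewrite (_ : (fun _ => 1) = (fun g : sbm_graph V => \prod_(e : E | upper e) (fun _ _ => 1) e (g e))).
  have /= -> := expect_prod (V:=V) p q (fun _ _ => 1); apply: big1 => e _; by rewrite !mulr1 subrKC.
by apply: boolp.funext => g; rewrite big1_eq.
Qed.
End Expect.

Section RealIneq.
Variable R : realType.
Implicit Types t x : R.

Lemma expR_up t : 0 <= t -> t <= 1/2 -> expR t <= 1 + t + 2 * t ^+ 2.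
Proof.
move=> t0 t1.
have h1 : 1 - t <= expR (- t) by have := expR_ge1Dx (- t); rewrite -[1 - t]/(1 + - t).
have h2 : 0 < 1 - t by lra.
rewrite -[expR t]invrK -expRN.
have h3 : 0 < expR (- t) := expR_gt0 _.
rewrite -(@ler_pM2l _ (expR (- t))) // mulfV ?gt_eqF //.
apply: le_trans (_ : 1 <= (1 - t) * (1 + t + 2 * t ^+ 2)) _.
  have : 0 <= t ^+ 2 * (1 - 2 * t) by apply: mulr_ge0; [exact: sqr_ge0 | lra].
  move=> h; nra.
apply: ler_wpM2r => //; nra.
Qed.

Lemma expR_ge_sq t : 0 <= t -> (1 + t / 2) ^+ 2 <= expR t.
Proof.
move=> t0; have -> : t = t / 2 + t / 2 by rewrite -splitr.
rewrite expRD -expr2 (_ : (t / 2 + t / 2) / 2 = t / 2); last by rewrite -splitr.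
apply: lerXn2r; rewrite ?nnegrE ?expR_ge0 //; try lra; exact: expR_ge1Dx.
Qed.

Lemma expRN_up t : 0 <= t -> expR (- t) <= 1 - t + t ^+ 2.
Proof.
move=> t0.
have hD := expR_ge_sq t0.
have hD1 : 1 <= (1 + t / 2) ^+ 2 by nra.
have hpos : 0 < expR t := expR_gt0 _.
rewrite expRN -(@ler_pM2l _ (expR t)) // mulfV ?gt_eqF //.
apply: le_trans (_ : 1 <= (1 + t / 2) ^+ 2 * (1 - t + t ^+ 2)) _.
  have e : (1 + t / 2) ^+ 2 * (1 - t + t ^+ 2) =
      1 + t ^+ 2 / 4 + 3 * t ^+ 3 / 4 + t ^+ 4 / 4 by field.
  rewrite e; have : 0 <= t ^+ 3 by apply: exprn_ge0.
  have : 0 <= t ^+ 4 by apply: exprn_ge0.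
  have : 0 <= t ^+ 2 by apply: exprn_ge0.
  lra.
apply: ler_wpM2r => //; nra.
Qed.

Lemma expRN_low t : 1 - t <= expR (- t).
Proof. by have := expR_ge1Dx (- t). Qed.

End RealIneq.

Section ExpectLemmas.
Variable R : realType.
Variable V : 'I_2 -> nat.
Local Notation T := (sbm_node V).
Local Notation E := (T * T)%type.
Local Notation G := (sbm_graph V).
Variables p q : R.
Hypothesis hp : 0 <= p <= 1.
Hypothesis hq : 0 <= q <= 1.

Lemma weight_ge0 (g : G) : 0 <= sbm_weight p q g.
Proof.
rewrite weight_prod; apply: prodr_ge0 => e _.
rewrite /wF /ep /edge_prob.
move: hp hq => /andP [p0 p1] /andP [q0 q1].
by case: (upper e); case: (g e); case: (community e.1 == community e.2); rewrite ?subr_ge0.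
Qed.

Lemma expect_le (X Y : G -> R) : (forall g, X g <= Y g) ->
  sbm_expect p q X <= sbm_expect p q Y.
Proof.
move=> H; apply: ler_sum => g _; apply: ler_wpM2l; [exact: weight_ge0 | exact: H].
Qed.

Lemma expectD (X Y : G -> R) :
  sbm_expect p q (fun g => X g + Y g) = sbm_expect p q X + sbm_expect p q Y.
Proof. by rewrite /sbm_expect -big_split; apply: eq_bigr => g _; rewrite mulrDr. Qed.

Lemma expectZ c (X : G -> R) :
  sbm_expect p q (fun g => c * X g) = c * sbm_expect p q X.
Proof.
rewrite /sbm_expect mulr_sumr; apply: eq_bigr => g _; by rewrite mulrCA.
Qed.

Lemma expect_sum (I : finType) (P : pred I) (F : I -> G -> R) :
  sbm_expect p q (fun g => \sum_(i | P i) F i g) =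
  \sum_(i | P i) sbm_expect p q (F i).
Proof.
rewrite /sbm_expect; under eq_bigr do rewrite mulr_sumr.
by rewrite exchange_big.
Qed.

Lemma expect_cst c : sbm_expect p q (fun _ : G => c) = c.
Proof.
rewrite (_ : (fun _ => c) = (fun _ => c * 1)); last by apply: boolp.funext => g; rewrite mulr1.
by rewrite expectZ expect1 mulr1.
Qed.

Lemma pow_bound (z : R) (m : nat) : 0 < z ->
  (1 + p * (z - 1)) ^+ m <= expR (m%:R * (p * (z - 1))).
Proof.
move=> z0; rewrite expRM_natl; apply: lerXn2r; rewrite ?nnegrE ?expR_ge0 //.
  move: hp => /andP [p0 p1]; nra.
exact: expR_ge1Dx.
Qed.

Lemma tail_bound (u : T) k (uk : community u = k) (t s : R) :
  0 <= t -> t <= 1/2 ->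
  sbm_expect p q (fun g => if s <= `|(nbr_count g u k)%:R - p * (V k)%:R| then 1 else 0)
   <= 2 * expR (2 * (p * (V k)%:R) * t ^+ 2 - t * s + t).
Proof.
move=> t0 t1.
set mu := p * (V k)%:R.
move: hp => /andP [p0 p1].
have mu0 : 0 <= mu by rewrite /mu mulr_ge0.
set c1 := expR (- (t * (mu + s))).
set c2 := expR (t * (mu - s)).
apply: (@le_trans _ _ (sbm_expect p q (fun g =>
    c1 * expR t ^+ nbr_count g u k + c2 * expR (- t) ^+ nbr_count g u k))).
  apply: expect_le => g.
  set N := nbr_count g u k.
  have e1 : c1 * expR t ^+ N = expR (t * (N%:R - mu - s)).
    by rewrite /c1 -expRM_natl -expRD; congr expR; ring.
  have e2 : c2 * expR (- t) ^+ N = expR (t * (mu - s - N%:R)).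
    by rewrite /c2 -expRM_natl -expRD; congr expR; ring.
  rewrite e1 e2.
  have g1 : forall x : R, 0 <= x -> 1 <= expR x.
    by move=> x x0; apply: le_trans (expR_ge1Dx x); lra.
  case: ifP => h.
    move: h; rewrite ler_normr => /orP [] h.
      have := g1 (t * (N%:R - mu - s)) ltac:(apply: mulr_ge0 => //; lra).
      have := expR_ge0 (t * (mu - s - N%:R)); lra.
    have := g1 (t * (mu - s - N%:R)) ltac:(apply: mulr_ge0 => //; lra).
    have := expR_ge0 (t * (N%:R - mu - s)); lra.
  by apply: addr_ge0; apply: expR_ge0.
rewrite expectD !expectZ !expect_mgf // mulr2n mulrDl mul1r.
have hV1 : ((V k).-1)%:R <= (V k)%:R :> R by rewrite ler_nat leq_pred.
have hV2 : (V k)%:R - 1 <= ((V k).-1)%:R :> R.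
  case: (V k) => [|m] /=; first by rewrite subr_le0.
  by rewrite -natr1 addrK.
have hm0 : 0 <= ((V k).-1)%:R :> R by [].
apply: lerD.
- apply: le_trans (_ : c1 * expR (((V k).-1)%:R * (p * (expR t - 1))) <= _).
    apply: ler_wpM2l; first exact: expR_ge0.
    exact: pow_bound (expR_gt0 _).
  rewrite /c1 -expRD ler_expR.
  have h1 := expR_up t0 t1.
  have h2 : 0 <= expR t - 1 by have := expR_ge1Dx t; lra.
  have h3 : ((V k).-1)%:R * (p * (expR t - 1)) <= mu * (expR t - 1).
    rewrite /mu mulrA [_ * p]mulrC; apply: ler_wpM2r => //; apply: ler_wpM2l => //.
  have h4 : mu * (expR t - 1) <= mu * (t + 2 * t ^+ 2).
    apply: ler_wpM2l => //; lra.
  nra.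
- apply: le_trans (_ : c2 * expR (((V k).-1)%:R * (p * (expR (- t) - 1))) <= _).
    apply: ler_wpM2l; first exact: expR_ge0.
    exact: pow_bound (expR_gt0 _).
  rewrite /c2 -expRD ler_expR.
  have h1 := expRN_up t0.
  have h1' := expRN_low t.
  have h2 : expR (- t) - 1 <= 0 by rewrite subr_le0 expR_le1; lra.
  have h3 : ((V k).-1)%:R * (p * (expR (- t) - 1)) <= ((V k)%:R - 1) * (p * (expR (- t) - 1)).
    apply: ler_wnM2r => //; rewrite mulr_ge0_le0 //.
  have h4 : ((V k)%:R - 1) * (p * (expR (- t) - 1)) = mu * (expR (- t) - 1) - p * (expR (- t) - 1).
    by rewrite /mu; ring.
  have h5 : mu * (expR (- t) - 1) <= mu * (- t + t ^+ 2) by apply: ler_wpM2l => //; lra.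
  have h6 : - (p * (expR (- t) - 1)) <= t.
    have : p * (1 - expR (- t)) <= 1 * t by apply: ler_pM => //; lra.
    lra.
  have h7 : 0 <= mu * t ^+ 2 by apply: mulr_ge0 => //; apply: sqr_ge0.
  nra.
Qed.

End ExpectLemmas.

Section CountBound.
Variable R : realType.
Variable V : 'I_2 -> nat.
Local Notation T := (sbm_node V).
Local Notation G := (sbm_graph V).
Variables p q : R.
Hypothesis hp : 0 <= p <= 1.
Hypothesis hq : 0 <= q <= 1.

Lemma count_bound k (s t : R) : 0 <= t -> t <= 1/2 ->
  sbm_expect p q (fun g : G =>
    (#|[set u : T | (community u == k) &&
         (s <= `|(nbr_count g u k)%:R - p * (V k)%:R|)]%SET|)%:R)
  <= (V k)%:R * (2 * expR (2 * (p * (V k)%:R) * t ^+ 2 - t * s + t)).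
Proof.
move=> t0 t1.
have H : forall g : G,
  (#|[set u : T | (community u == k) &&
         (s <= `|(nbr_count g u k)%:R - p * (V k)%:R|)]%SET|)%:R =
  \sum_(u : T | community u == k)
     (if s <= `|(nbr_count g u k)%:R - p * (V k)%:R| then 1 else 0) :> R.
  move=> g; rewrite -sum1_card natr_sum big_mkcond [RHS]big_mkcond /=.
  apply: eq_bigr => u _; rewrite inE.
  by case: (community u == k); case: (s <= _).
rewrite (boolp.funext H) expect_sum.
apply: le_trans (_ : \sum_(u : T | community u == k)
   (2 * expR (2 * (p * (V k)%:R) * t ^+ 2 - t * s + t)) <= _).
  apply: ler_sum => u /eqP uk; exact: tail_bound.
rewrite sumr_const (@eq_card _ _ [set v : T | community v == k]%SET).
  by rewrite card_comm (mulr_natl (2 * expR _) (V k)).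
by move=> v; rewrite inE.
Qed.

End CountBound.

Lemma cont_eps (R : realType) (f : R -> R) (x0 : R) : continuous f -> forall e : R, 0 < e ->
  exists2 eta : R, 0 < eta & forall x, `|x - x0| < eta -> `|f x0 - f x| < e.
Proof.
move=> cf e e0.
have := @cvgr_dist_lt _ _ _ (nbhs x0) _ f (f x0) (cf x0) e e0.
move=> H0; have [eta /= eta0 H] := iffLR (nbhs_ballP _ _) (H0 _); exists eta => // x hx.
apply: H; rewrite -ball_normE /ball_ /= distrC //.
Qed.

Lemma weak_of_EX (R : realType) (Vn : nat -> 'I_2 -> nat) (pn qn : nat -> R)
  (hp : forall n, 0 <= pn n <= 1) (hq : forall n, 0 <= qn n <= 1)
  (X : forall n, sbm_graph (Vn n) -> R) (X0 : forall n g, 0 <= X n g)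
  (HE : forall e : R, 0 < e -> \forall n \near \oo, sbm_expect (pn n) (qn n) (X n) <= e) :
  weak_cvg_const (fun f n => sbm_expect (pn n) (qn n) (fun g => f (X n g))) 0.
Proof.
move=> f cf [M hM].
have M0 : 0 <= M by apply: le_trans (hM 0); exact: normr_ge0.
apply/cvgrPdist_le => e e0.
have [eta eta0 Heta] := @cont_eps R f 0 cf (e / 2) ltac:(lra).
have pw : forall x, 0 <= x -> `|f 0 - f x| <= e / 2 + (2 * M / eta) * x.
  move=> x x0; case: (ltP x eta) => hx.
    have := Heta x; rewrite subr0 ger0_norm // => /(_ hx) h.
    have : 0 <= (2 * M / eta) * x by apply: mulr_ge0 => //; apply: divr_ge0; lra.
    lra.
  apply: le_trans (_ : 2 * M <= _).
    apply: le_trans (ler_normB _ _) _; have := hM 0; have := hM x; lra.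
  have : 2 * M <= (2 * M / eta) * x.
    have h : 1 <= x / eta by rewrite ler_pdivlMr // mul1r.
    have : 0 <= 2 * M * (x / eta - 1) by apply: mulr_ge0; lra.
    rewrite (_ : 2 * M / eta * x = 2 * M * (x / eta)); first lra.
    by rewrite [x / eta]mulrC mulrA.
  lra.
have pos : 0 < e * eta / (4 * M + 1) by apply: divr_gt0; [apply: mulr_gt0 | lra].
apply: filterS (HE _ pos) => n hn.
have -> : f 0 - sbm_expect (pn n) (qn n) (fun g => f (X n g)) =
    sbm_expect (pn n) (qn n) (fun g => f 0 - f (X n g)).
  rewrite (_ : (fun g => f 0 - f (X n g)) = (fun g => f 0 + (-1) * f (X n g))); last first.
    by apply: boolp.funext => g; rewrite mulN1r.
  by rewrite expectD ?expectZ ?expect_cst // mulN1r.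
apply: le_trans (_ : sbm_expect (pn n) (qn n) (fun g => e / 2 + (2 * M / eta) * X n g) <= _).
  apply: le_trans (ler_norm_sum _ _ _) _.
  apply: ler_sum => g _; rewrite normrM (ger0_norm (weight_ge0 (hp n) (hq n) g)).
  by apply: ler_wpM2l; [exact: weight_ge0 | exact: pw].
rewrite expectD ?expectZ ?expect_cst //.
have : (2 * M / eta) * sbm_expect (pn n) (qn n) (X n) <= (2 * M / eta) * (e * eta / (4 * M + 1)).
  apply: ler_wpM2l => //; apply: divr_ge0; lra.
have -> : (2 * M / eta) * (e * eta / (4 * M + 1)) = e * (2 * M / (4 * M + 1)).
  by field; apply/andP; split; rewrite gt_eqF //; lra.
have : 2 * M / (4 * M + 1) <= 1 / 2.
  rewrite ler_pdivrMr; last lra.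
  lra.
move=> h1 h2.
have : e * (2 * M / (4 * M + 1)) <= e * (1/2) by apply: ler_wpM2l; lra.
lra.
Qed.

Lemma limsup_bound (R : realType) (u : nat -> R) :
  (limn_esup (fun n => (u n)%:E) < +oo)%E -> exists C : R, \forall n \near \oo, u n <= C.
Proof.
rewrite limn_esup_lim (cvg_lim _ (@cvg_esups_inf R (fun n => (u n)%:E))) //.
move=> /ereal_inf_lt [_ [n0 _ <-]] h.
have hu : ((u n0)%:E <= esups (fun n => (u n)%:E) n0)%E.
  by apply: ereal_sup_ubound; exists n0 => /=.
exists (fine (esups (fun n => (u n)%:E) n0)).
apply: filterS (nbhs_infty_ge n0) => n hn.
have : ((u n)%:E <= esups (fun n => (u n)%:E) n0)%E.
  by apply: ereal_sup_ubound; exists n => /=.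
move: hu h; case: (esups _ n0) => [r| |] //=.
Qed.

Section RealCore.
Variable R : realType.

Lemma t_choice (mu d D : R) : 0 < mu -> 0 < d -> 0 < D -> d / mu <= D ->
  exists t, [/\ 0 <= t, t <= 1/2 &
    2 * mu * t ^+ 2 - t * Num.sqrt (mu * d) + t <= - (1 / (4 * (1 + D)) * d / 2) + 1/2].
Proof.
move=> mu0 d0 D0 hD.
set c := 1 / (4 * (1 + D)).
have c0 : 0 < c by rewrite /c divr_gt0 //; lra.
have hcD : c * (1 + D) = 1/4 by rewrite /c; field; lra.
have c4 : c <= 1/4 by nra.
have hc2D : c ^+ 2 * D <= 1/16.
  have h1 : D <= (1 + D) ^+ 2 by rewrite expr2; nra.
  have := ler_wpM2l (sqr_ge0 c) h1.
  rewrite -exprMn hcD expr2; lra.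
set r := Num.sqrt (d / mu).
have dm0 : 0 <= d / mu by apply: divr_ge0; lra.
have r0 : 0 <= r := sqrtr_ge0 _.
have r2 : r ^+ 2 = d / mu by rewrite sqr_sqrtr.
have hs : Num.sqrt (mu * d) = mu * r.
  rewrite (_ : mu * d = mu ^+ 2 * (d / mu)); last by field; rewrite gt_eqF.
  by rewrite sqrtrM ?sqr_ge0 // sqrtr_sqr ger0_norm //; lra.
exists (c * r); split.
- by apply: mulr_ge0; lra.
- have ht2 : (c * r) ^+ 2 <= 1/16.
    rewrite exprMn r2; apply: le_trans hc2D; apply: ler_wpM2l; last exact: hD.
    exact: sqr_ge0.
  have : 0 <= c * r by apply: mulr_ge0; lra.
  move: ht2; set t := c * r => ht2 ht0.
  nra.
- rewrite hs.
  have e1 : 2 * mu * (c * r) ^+ 2 = 2 * c ^+ 2 * d.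
    by rewrite exprMn r2; field; rewrite gt_eqF.
  have e2 : c * r * (mu * r) = c * d.
    rewrite (_ : c * r * (mu * r) = c * mu * r ^+ 2); last by ring.
    by rewrite r2; field; rewrite gt_eqF.
  rewrite e1 e2.
  have ht2 : (c * r) ^+ 2 <= 1/16.
    rewrite exprMn r2; apply: le_trans hc2D; apply: ler_wpM2l; last exact: hD.
    exact: sqr_ge0.
  have : 0 <= c * r by apply: mulr_ge0; lra.
  move: ht2; set t := c * r => ht2 ht0.
  have : t <= 1/2 by nra.
  have : 2 * c ^+ 2 * d <= c / 2 * d.
    apply: ler_wpM2r; first lra.
    rewrite expr2; nra.
  lra.
Qed.

Lemma exp_decay (c d : R) : 0 < c -> 0 < d ->
  expR (- (c * d / 2) + 1/2) <= 32 / (c ^+ 2 * d ^+ 2).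
Proof.
move=> c0 d0.
have x0 : 0 < c * d / 2 by apply: divr_gt0 => //; apply: mulr_gt0.
set x := c * d / 2 in x0 *.
rewrite expRD.
have h12 : expR (1/2 : R) <= 2.
  have := @expR_up R (1/2) ltac:(lra) ltac:(lra); lra.
have hx := @expR_ge_sq R x (ltW x0).
have hx2 : (x / 2) ^+ 2 <= expR x.
  apply: le_trans _ hx; apply: lerXn2r; rewrite ?nnegrE; lra.
have hpos : 0 < (x / 2) ^+ 2 by apply: exprn_gt0; lra.
rewrite expRN.
apply: le_trans (_ : ((x / 2) ^+ 2)^-1 * 2 <= _).
  apply: ler_pM; rewrite ?invr_ge0 ?expR_ge0 //.
  by rewrite lef_pV2 // ?posrE ?expR_gt0.
rewrite (_ : ((x / 2) ^+ 2)^-1 * 2 = 32 / (c ^+ 2 * d ^+ 2)) //.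
rewrite /x; field.
by apply/andP; split; rewrite gt_eqF.
Qed.

End RealCore.

Unset Implicit Arguments. Set Strict Implicit. Set Printing Implicit Defensive.

Theorem lemmaB2 (R : realType) (V : nat -> 'I_2 -> nat) (v : 'I_2 -> R)
  (a b : R) (lam gam del : nat -> R)
  (hv : forall k, 0 < v k)
  (hV : forall k, (fun n => (V n k)%:R / n%:R) @ \oo --> v k)
  (hb : 0 < b) (hab : b < a)
  (hprob : forall n, 0 <= a * lam n / n%:R <= 1 /\ 0 <= b * lam n / n%:R <= 1)
  (hlam : lam @ \oo --> +oo)
  (hgam : forall n, 0 < gam n) (hdel : forall n, 0 < del n)
  (hdelcvg : del @ \oo --> +oo)
  (hdellam : (limn_esup (fun n => (del n / lam n)%:E) < +oo)%E)
  (hgamdel : (limn_esup (fun n => (gam n / del n)%:E) < +oo)%E) :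
  forall k : 'I_2,
    weak_cvg_const
      (fun (f : R -> R) (n : nat) =>
         sbm_expect (a * lam n / n%:R) (b * lam n / n%:R)
           (fun g : sbm_graph (V n) =>
              f (gam n / n%:R *
                 (#|[set u : sbm_node (V n) | (community u == k) &&
                     (`|(nbr_count g u k)%:R - a * lam n / n%:R * (V n k)%:R|
                        >= Num.sqrt (a * lam n / n%:R * (V n k)%:R * del n))]%SET|)%:R)))
      0.
Proof.
move=> k.
apply: (@weak_of_EX R V (fun n => a * lam n / n%:R) (fun n => b * lam n / n%:R)
  (fun n => (hprob n).1) (fun n => (hprob n).2)
  (fun n g => gam n / n%:R *
                 (#|[set u : sbm_node (V n) | (community u == k) &&
                     (`|(nbr_count g u k)%:R - a * lam n / n%:R * (V n k)%:R|
                        >= Num.sqrt (a * lam n / n%:R * (V n k)%:R * del n))]%SET|)%:R)).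
  move=> n g; apply: mulr_ge0 => //; apply: divr_ge0 => //; exact: ltW.
move=> e e0.
have a0 : 0 < a by lra.
have vk0 := hv k.
have [Cd hCd] := limsup_bound hdellam.
have [Cg hCg] := limsup_bound hgamdel.
have hW := @cvgr_dist_lt _ _ _ _ _ _ _ (hV k) (v k / 2) ltac:(lra).
have hl := iffLR (cvgryPge _) hlam 1.
set Cd1 := `|Cd| + 1.
set Cg1 := `|Cg| + 1.
have Cd10 : 0 < Cd1 by rewrite /Cd1; have := normr_ge0 Cd; lra.
have Cg10 : 0 < Cg1 by rewrite /Cg1; have := normr_ge0 Cg; lra.
set D := 2 * Cd1 / (a * v k).
have D0 : 0 < D by rewrite /D; apply: divr_gt0; [lra | exact: mulr_gt0].
set c := 1 / (4 * (1 + D)).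
have c0 : 0 < c by rewrite /c divr_gt0 //; lra.
set L := 128 * Cg1 * v k / (c ^+ 2 * e).
have hd := iffLR (cvgryPge _) hdelcvg L.
near=> n.
have hCdn : del n / lam n <= Cd by near: n; exact: hCd.
have hCgn : gam n / del n <= Cg by near: n; exact: hCg.
have hWn : `|v k - (V n k)%:R / n%:R| < v k / 2 by near: n; exact: hW.
have hln : 1 <= lam n by near: n; exact: hl.
have hdn : L <= del n by near: n; exact: hd.
have hdel0 := hdel n.
have hgam0 := hgam n.
move: hWn; rewrite ltr_distlC => /andP [hW1 hW2].
have nR0 : 0 < n%:R :> R.
  rewrite ltr0n lt0n; apply/negP => /eqP n0; move: hW1; rewrite n0 invr0 mulr0; lra.
have WnR0 : 0 < (V n k)%:R / n%:R :> R by lra.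
have W0 : 0 < (V n k)%:R :> R.
  by move: WnR0; rewrite pmulr_lgt0 // invr_gt0.
set W := (V n k)%:R in hW1 hW2 WnR0 W0 *.
set nR := n%:R in nR0 hW1 hW2 WnR0 *.
set p := a * lam n / nR.
have hp := (hprob n).1.
have hq := (hprob n).2.
have mueq : p * W = a * lam n * (W / nR) by rewrite /p; field; rewrite gt_eqF.
have mu0 : 0 < p * W by rewrite mueq; apply: mulr_gt0 => //; apply: mulr_gt0; lra.
have hdD : del n / (p * W) <= D.
  rewrite mueq (_ : del n / (a * lam n * (W / nR)) = (del n / lam n) / (a * (W / nR))); last first.
    by field; apply/and3P; split; rewrite gt_eqF //; lra.
  have aW0 : 0 < a * (W / nR) by apply: mulr_gt0.
  rewrite ler_pdivrMr //.
  have : D * (a * (v k / 2)) = Cd1 by rewrite /D; field; apply/andP; split; rewrite gt_eqF //.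
  have : D * (a * (v k / 2)) <= D * (a * (W / nR)).
    apply: ler_wpM2l; first lra; apply: ler_wpM2l; lra.
  have : Cd <= Cd1 by rewrite /Cd1; have := ler_norm Cd; lra.
  lra.
have [t [t0 t1 ht]] := t_choice mu0 hdel0 D0 hdD.
have hC := count_bound (V n) hp hq k (Num.sqrt (p * W * del n)) t0 t1.
rewrite /= expectZ.
apply: le_trans (_ : gam n / nR * (W * (2 * (32 / (c ^+ 2 * del n ^+ 2)))) <= _).
  apply: ler_wpM2l; first by apply: divr_ge0; lra.
  apply: le_trans hC _.
  apply: ler_wpM2l; first lra.
  apply: ler_wpM2l; first lra.
  apply: le_trans (exp_decay c0 hdel0).
  by rewrite ler_expR.
have -> : gam n / nR * (W * (2 * (32 / (c ^+ 2 * del n ^+ 2)))) =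
   64 * ((gam n / del n) * (W / nR)) / (c ^+ 2 * del n).
  by field; apply/and3P; split; rewrite gt_eqF //; lra.
have c2d : 0 < c ^+ 2 * del n by apply: mulr_gt0 => //; apply: exprn_gt0.
rewrite ler_pdivrMr //.
have hL : e * (c ^+ 2 * L) = 128 * Cg1 * v k.
  by rewrite /L; field; apply/andP; split; rewrite gt_eqF //; apply: exprn_gt0.
have hLd : e * (c ^+ 2 * L) <= e * (c ^+ 2 * del n).
  apply: ler_wpM2l; first lra; apply: ler_wpM2l => //; apply: sqr_ge0.
have hCC : Cg <= Cg1 by rewrite /Cg1; have := ler_norm Cg; lra.
have hA0 : 0 < gam n / del n by apply: divr_gt0.
have hAB : (gam n / del n) * (W / nR) <= Cg1 * (3 * v k / 2).
  apply: ler_pM; try lra.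
have hCv : 0 < Cg1 * v k by apply: mulr_gt0.
rewrite hL in hLd; rewrite (_ : Cg1 * (3 * v k / 2) = 3 / 2 * (Cg1 * v k)) in hAB; last by ring.
rewrite (_ : 128 * Cg1 * v k = 128 * (Cg1 * v k)) in hLd; last by ring.
lra.
Unshelve. all: by end_near.
Qed.
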